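(* $M^L(5)=8$.
   Context: $\mathbb{F}=\{0,1\}$. The binary $n$-dimensional hypercube $\mathbb{F}^n$ is the graph on $\mathbb{F}^n$ where two words are adjacent iff their Hamming distance is $1$. For a nonempty $C\subseteq\mathbb{F}^n$, $I(\mathbf{x})=N[\mathbf{x}]\cap C$ with $N[\mathbf{x}]$ the words at Hamming distance $\le1$ from $\mathbf{x}$. $C$ is a local identifying code if $I(\mathbf{x})\ne\emptyset$ for all $\mathbf{x}$ and $I(\mathbf{x})\ne I(\mathbf{y})$ for all adjacent $\mathbf{x},\mathbf{y}$. $M^L(n)$ is the minimum cardinality of a local identifying code in $\mathbb{F}^n$. *)

(* Defs.v *)
From mathcomp Require Import all_boot.
Set Implicit Arguments. Unset Strict Implicit. Unset Printing Implicit Defensive.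

(* Binary words of length n: F^n with F = bool. *)
Definition word (n : nat) := {ffun 'I_n -> bool}.

Definition hamming n (x y : word n) : nat := #|[set i : 'I_n | x i != y i]|.

Definition adjacent n (x y : word n) : bool := hamming x y == 1.

Definition closed_nbhd n (x : word n) : {set word n} :=
  [set y : word n | hamming x y <= 1].

Definition I_set n (C : {set word n}) (x : word n) : {set word n} :=
  closed_nbhd x :&: C.

Definition local_identifying_code n (C : {set word n}) : Prop :=
  C != set0 /\
  (forall x : word n, I_set C x != set0) /\
  (forall x y : word n, adjacent x y -> I_set C x != I_set C y).

Definition is_ML n (m : nat) : Prop :=
  (exists C : {set word n}, local_identifying_code C /\ #|C| = m) /\
  (forall C : {set word n}, local_identifying_code C -> m <= #|C|).

(* Main.v *)
Require Import Defs.
From mathcomp Require Import all_boot.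
Set Implicit Arguments. Unset Strict Implicit. Unset Printing Implicit Defensive.

Fixpoint first_unhit (ch : seq nat) (cs : seq (seq nat)) : option (seq nat) :=
  match cs with
  | [::] => None
  | Sx :: cs' => if has (fun z => z \in ch) Sx then first_unhit ch cs' else Some Sx
  end.

Fixpoint brf (f : nat -> seq nat -> bool) (l ex : seq nat) : bool :=
  match l with
  | [::] => false
  | s :: l' => if s \in ex then brf f l' ex else f s ex || brf f l' (s :: ex)
  end.

Fixpoint search (cs : seq (seq nat)) (k : nat) (ch ex : seq nat) : bool :=
  match first_unhit ch cs with
  | None => true
  | Some Sx => if k is k'.+1 then brf (fun s ex => search cs k' (s :: ch) ex) Sx ex
              else false
  end.

Lemma first_unhitP ch cs Sx : first_unhit ch cs = Some Sx ->
  Sx \in cs /\ ~~ has (fun z => z \in ch) Sx.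
Proof.
elim: cs => //= Sy cs IH.
case: ifP => [_ /IH [H1 H2]|HS [<-]]; first by rewrite inE H1 orbT.
by rewrite inE eqxx HS.
Qed.

Lemma brfP (P : pred nat) (f : nat -> seq nat -> bool) (l ex : seq nat) :
  (forall s ex, s \in l -> P s -> (forall e, e \in ex -> ~~ P e) -> f s ex) ->
  (exists2 z, z \in l & P z) -> (forall e, e \in ex -> ~~ P e) -> brf f l ex.
Proof.
elim: l ex => [|s l IH] ex Hf [z Hz Pz] Hex /=; first by [].
have Hf' : forall s' ex', s' \in l -> P s' -> (forall e, e \in ex' -> ~~ P e) -> f s' ex'.
  by move=> s' ex' H; apply: Hf; rewrite inE H orbT.
case: ifP => Hs.
  apply: IH => //; exists z => //.
  move: Hz; rewrite inE; case/orP => // /eqP Ez.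
  by move: (Hex _ Hs); rewrite -Ez Pz.
case Ps: (P s).
  by rewrite Hf // inE eqxx.
apply/orP; right; apply: IH => //.
  exists z => //; move: Hz; rewrite inE; case/orP => // /eqP Ez.
  by move: Ps; rewrite -Ez Pz.
by move=> e; rewrite inE; case/orP => [/eqP ->|/Hex]; rewrite ?Ps.
Qed.

Lemma mem_rem_neq (z s : nat) (r : seq nat) : z != s -> z \in r -> z \in rem s r.
Proof.
elim: r => //= a r IH Hzs; rewrite inE; case/orP => [/eqP Eza|Hz].
  subst z; by rewrite (negbTE Hzs) inE eqxx.
by case: ifP => _ //; rewrite inE IH ?orbT.
Qed.

Lemma searchP (P : pred nat) cs k ch ex rest :
  (forall Sx, Sx \in cs -> has P Sx) ->
  (forall z, P z -> (z \in ch) || (z \in rest)) ->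
  (forall e, e \in ex -> ~~ P e) ->
  size rest <= k -> search cs k ch ex.
Proof.
move=> Hcs; elim: k ch ex rest => [|k IH] ch ex rest Hcov Hex Hsz /=;
  case E: (first_unhit ch cs) => [Sx|] //; case/first_unhitP: E => HS Hun;
  have /hasP [z zS Pz] := Hcs _ HS;
  have zch : z \notin ch by apply: contra Hun => zc; apply/hasP; exists z.
- by move: (Hcov _ Pz) Hsz; rewrite (negbTE zch) /=; case: (rest).
apply: (brfP (P := P)) => //; last by exists z.
move=> s ex' sS Ps Hex'.
have sch : s \notin ch by apply: contra Hun => sc; apply/hasP; exists s.
have srest : s \in rest by move: (Hcov _ Ps); rewrite (negbTE sch).
apply: (IH _ _ (rem s rest)) => //.
  move=> y Py; rewrite inE; case: (eqVneq y s) => //= Hys.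
  move: (Hcov _ Py); case/orP => [->//|Hy]; by rewrite mem_rem_neq ?orbT.
by rewrite size_rem //; move: Hsz srest; case: (rest).
Qed.

Definition hamn (a b : nat) : nat :=
  count (fun i => odd (a %/ 2 ^ i) != odd (b %/ 2 ^ i)) (iota 0 5).
Definition nb a := [seq z <- iota 0 32 | hamn a z <= 1].
Definition sep a b := [seq z <- iota 0 32 | (hamn a z <= 1) != (hamn b z <= 1)].
Definition cs : seq (seq nat) :=
  [seq nb a | a <- iota 0 32] ++
  [seq sep a b | a <- iota 0 32, b <- [seq b <- iota 0 32 | hamn a b == 1]].

Lemma search_false : search cs 7 [::] [::] = false.
Proof. vm_compute. reflexivity. Qed.

Lemma card_count (Q : pred 'I_5) :
  #|[set i | Q i]| = count (fun i : nat => Q (inord i)) (iota 0 5).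
Proof.
rewrite cardsE cardE size_filter -val_enum_ord count_map enumT.
apply: eq_count => i /=; by rewrite inord_val.
Qed.

Definition dec (n : nat) : word 5 := [ffun i : 'I_5 => odd (n %/ 2 ^ i)].

Lemma hamming_dec a b : hamming (dec a) (dec b) = hamn a b.
Proof.
rewrite /hamming card_count /hamn; apply: eq_in_count => i.
by rewrite mem_iota => /andP [_ Hi]; rewrite !ffunE inordK.
Qed.

Definition enc (w : word 5) : nat :=
  (w (inord 0) : nat) + 2 * w (inord 1) + 4 * w (inord 2) + 8 * w (inord 3)
  + 16 * w (inord 4).

Lemma enc_lt w : enc w < 32.
Proof.
rewrite /enc; move: (w (inord 0)) (w (inord 1)) (w (inord 2)) (w (inord 3)) (w (inord 4)).
by do 5! case.
Qed.

Lemma dec_enc w : dec (enc w) = w.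
Proof.
apply/ffunP => i; rewrite ffunE.
case: i => m Hi /=; rewrite (_ : Ordinal Hi = inord m); last by apply/val_inj; rewrite /= inordK.
case: m Hi => [|[|[|[|[|m]]]]] Hi //=; rewrite /enc;
  move: (w (inord 0)) (w (inord 1)) (w (inord 2)) (w (inord 3)) (w (inord 4));
  by do 5! case.
Qed.

Lemma inj_check : all (fun a => all (fun b =>
   (all (fun i => odd (a %/ 2 ^ i) == odd (b %/ 2 ^ i)) (iota 0 5)) ==> (a == b))
   (iota 0 32)) (iota 0 32).
Proof. by vm_compute. Qed.

Lemma dec_inj a b : a < 32 -> b < 32 -> dec a = dec b -> a = b.
Proof.
move=> Ha Hb E; apply/eqP.
have := allP inj_check a; rewrite mem_iota Ha => /(_ isT) /allP /(_ b).
rewrite mem_iota Hb => /(_ isT) /implyP; apply; apply/allP => i.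
rewrite mem_iota => /andP [_ Hi].
by have := congr1 (fun f : word 5 => f (inord i)) E; rewrite /= !ffunE inordK // => ->.
Qed.

Lemma code_lower (C : {set word 5}) : local_identifying_code C -> 8 <= #|C|.
Proof.
case=> _ [Hdom Hsep].
rewrite leqNgt; apply/negP => HC.
pose P := fun n => (n < 32) && (dec n \in C).
pose rest := [seq n <- iota 0 32 | dec n \in C].
have Hsz : size rest <= 7.
  have : size (map dec rest) <= size (enum C).
    apply: uniq_leq_size.
      rewrite map_inj_in_uniq ?filter_uniq ?iota_uniq //.
      by move=> x y; rewrite !mem_filter !mem_iota /= => /andP [_ Hx] /andP [_ Hy]; apply: dec_inj.
    by move=> w /mapP [n]; rewrite mem_filter mem_enum => /andP [H _] ->.
  by rewrite size_map -cardE => H; apply: leq_trans H _.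
have := search_false.
have -> // : search cs 7 [::] [::] = true.
apply: (searchP (P := P) (rest := rest)) => //; last first.
  by move=> z /andP [Hz Cz]; rewrite mem_filter Cz mem_iota.
move=> Sx; rewrite mem_cat; case/orP.
  case/mapP => a _ ->.
  have /set0Pn [w] := Hdom (dec a).
  rewrite inE inE => /andP [Hw Cw].
  apply/hasP; exists (enc w); last by rewrite /P enc_lt dec_enc.
  by rewrite mem_filter mem_iota enc_lt -hamming_dec dec_enc Hw.
case/allpairsPdep => a [b [_]]; rewrite mem_filter => /andP [Hab _] ->.
have Hadj : adjacent (dec a) (dec b) by rewrite /adjacent hamming_dec.
have Hne := Hsep _ _ Hadj.
have [w Hw] : exists w, (w \in I_set C (dec a)) != (w \in I_set C (dec b)).
  apply/existsP; apply: contraR Hne => /existsPn H.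
  by apply/eqP/setP => w; have := H w; rewrite negbK => /eqP.
move: Hw; rewrite !inE.
case Cw: (w \in C); rewrite ?andbF ?andbT //= => Hw.
apply/hasP; exists (enc w); last by rewrite /P enc_lt dec_enc.
by rewrite mem_filter mem_iota enc_lt -!hamming_dec dec_enc Hw.
Qed.

Definition code8 : seq nat := [:: 0; 1; 2; 3; 28; 29; 30; 31].

Lemma dom_check : all (fun a => has (fun z => hamn a z <= 1) code8) (iota 0 32).
Proof. by vm_compute. Qed.

Lemma sep_check : all (fun a => all (fun b => (hamn a b == 1) ==>
   has (fun z => (hamn a z <= 1) != (hamn b z <= 1)) code8) (iota 0 32)) (iota 0 32).
Proof. by vm_compute. Qed.

Lemma code_upper : exists C : {set word 5}, local_identifying_code C /\ #|C| = 8.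
Proof.
pose C0 := [set w in map dec code8].
have Hinj : {in code8 &, injective dec}.
  have Hlt : all (fun x => x < 32) code8 by [].
  by move=> x y Hx Hy; apply: dec_inj; apply: (allP Hlt).
exists C0; split; last first.
  by rewrite cardsE; apply/card_uniqP; rewrite map_inj_in_uniq.
split; first by apply/set0Pn; exists (dec 0); rewrite inE map_f.
split.
  move=> x; rewrite -(dec_enc x).
  have := allP dom_check (enc x); rewrite mem_iota enc_lt => /(_ isT) /hasP [z Hz Hh].
  apply/set0Pn; exists (dec z); rewrite in_setI !in_set hamming_dec Hh /=.
  exact: (map_f dec Hz).
move=> x y; rewrite -(dec_enc x) -(dec_enc y) /adjacent hamming_dec => Hxy.
have := allP sep_check (enc x); rewrite mem_iota enc_lt => /(_ isT) /allP /(_ (enc y)).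
rewrite mem_iota enc_lt => /(_ isT); rewrite Hxy implyTb => /hasP [z Hz Hh].
apply/negP => /eqP /setP /(_ (dec z)); rewrite !in_setI !in_set !hamming_dec (map_f dec Hz).
by rewrite !andbT => E; move: Hh; rewrite E eqxx.
Qed.

Theorem mainTheorem11 : is_ML 5 8.
Proof. split; [exact: code_upper | exact: code_lower]. Qed.
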